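(* Let $G$ be a graph with $n$ vertices and let $q>0$. It is possible to delete at most $qn^2$ edges from $G$ to obtain a subgraph all of whose connected components are $q$-cut-dense.
   Context: A graph $F$ is $q$-cut-dense if for every partition $V(F)=A\cup B$ into disjoint sets, the number of edges of $F$ between $A$ and $B$ is at least $q|A||B|$. *)

(* Defs.v *)
From HB Require Import structures.
From mathcomp Require Import all_boot all_order all_algebra.
Set Implicit Arguments. Unset Strict Implicit. Unset Printing Implicit Defensive.
Import Order.TTheory GRing.Theory Num.Theory.

(* A simple graph on vertex set T is a symmetric irreflexive relation e : rel T. *)

Definition edges (T : finType) (e : rel T) : {set {set T}} :=
  [set E : {set T} | [exists x, exists y, e x y && (E == [set x; y])]].

Definition e_between (T : finType) (h : rel T) (A B : {set T}) : nat :=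
  #|[set p : T * T | [&& p.1 \in A, p.2 \in B & h p.1 p.2]]|.

Definition component (T : finType) (h : rel T) (x : T) : {set T} :=
  [set y | connect h x y].

Definition cut_dense (R : numDomainType) (T : finType) (h : rel T)
    (C : {set T}) (q : R) : Prop :=
  forall A : {set T}, A \subset C ->
    (q * #|A|%:R * #|C :\: A|%:R <= (e_between h A (C :\: A))%:R)%R.

(* Main.v *)
Require Import Defs.
From HB Require Import structures.
From mathcomp Require Import all_boot all_order all_algebra.
Import Order.TTheory GRing.Theory Num.Theory.
Local Open Scope ring_scope.

Definition relS {T : finType} (S : {set T * T}) : rel T := fun x y => (x, y) \in S.
Definition Phi {T : finType} (S : {set T * T}) : nat :=
  #|[set p : T * T | ~~ connect (relS S) p.1 p.2]|.
Definition delS {T : finType} (e : rel T) (S : {set T * T}) : nat :=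
  #|edges e :\: edges (relS S)|.

Lemma split_step (R : realFieldType) (T : finType) (e : rel T) (q : R)
   (S : {set T * T}) (Ssym : symmetric (relS S)) (x : T) (A : {set T}) :
  let C := component (relS S) x in
  let B := C :\: A in
  A \subset C ->
  ~~ (q * #|A|%:R * #|B|%:R <= (e_between (relS S) A B)%:R) ->
  let S' := S :\: [set p | ((p.1 \in A) && (p.2 \in B)) || ((p.1 \in B) && (p.2 \in A))] in
  [/\ symmetric (relS S'),
      (Phi S + #|A| * #|B| <= Phi S')%N,
      (0 < #|A| * #|B|)%N &
      (delS e S' <= delS e S + e_between (relS S) A B)%N].
Proof.
move=> C B sAC viol S'.
have inC : forall v, (v \in C) = connect (relS S) x v by move=> v; rewrite inE.
have inB : forall v, (v \in B) = (v \notin A) && (v \in C) by move=> v; rewrite inE.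
clearbody C B.
have csym := sym_connect_sym Ssym.
have sBC : B \subset C by apply/subsetP => v; rewrite inB => /andP[].
have S'S : forall u v, relS S' u v -> relS S u v.
  by move=> u v; rewrite /relS inE => /andP[].
have S'E : forall u v, relS S' u v = relS S u v &&
   ~~ (((u \in A) && (v \in B)) || ((u \in B) && (v \in A))).
  by move=> u v; rewrite /relS /S' !inE andbC.
have S'sym : symmetric (relS S').
  move=> u v; rewrite !S'E Ssym; congr (_ && ~~ _).
  by rewrite orbC [(v \in A) && _]andbC [(v \in B) && _]andbC.
split => //.
-
  set D := [set p : T * T | ~~ connect (relS S) p.1 p.2].
  set D' := [set p : T * T | ~~ connect (relS S') p.1 p.2].
  have dis : [disjoint D & setX A B].
    rewrite -setI_eq0; apply/eqP/setP => [[u v]]; rewrite !inE /=.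
    apply/negbTE; apply/negP => /and3P[nc uA vB].
    have uC := subsetP sAC _ uA; have vC := subsetP sBC _ vB.
    move: uC vC; rewrite !inC => xu xv.
    move: nc; rewrite (connect_trans _ xv) //.
    by rewrite csym.
  have sub : D :|: setX A B \subset D'.
    apply/subsetP => [[u v]]; rewrite !inE /= => /orP[nc|/andP[uA vB]].
    + apply/negP => c; move/negP: nc; apply.
      by apply: (connect_sub _ c) => a b /S'S ab; apply: connect1.
    + have clA : closed (relS S') A.
        apply: intro_closed; first exact: (sym_connect_sym S'sym).
        move=> a b ab aA; have := ab; rewrite S'E => /andP[sab].
        rewrite aA /= => nb.
        apply/negPn/negP => bnA; move/negP: nb; apply.
        rewrite inB bnA /= inC.
        have := subsetP sAC _ aA; rewrite inC => xa.
        by rewrite (connect_trans xa (connect1 sab)).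
      apply/negP => c; have := closed_connect clA c.
      rewrite uA => /esym vA; move: vB; rewrite inB vA //.
  have := subset_leq_card sub; rewrite cardsU.
  move: dis; rewrite -setI_eq0 => /eqP ->; rewrite cards0 subn0 cardsX.
  done.
- rewrite muln_gt0 !lt0n; apply/andP; split; apply/negP => /eqP z;
    move: viol; rewrite z ?mulr0 ?mul0r ?mulr0 ?ler0n //.
-
  set X := [set p : T * T | [&& p.1 \in A, p.2 \in B & relS S p.1 p.2]].
  have sub : edges e :\: edges (relS S') \subset
             (edges e :\: edges (relS S)) :|: [set [set p.1; p.2] | p in X].
    apply/subsetP => E; rewrite in_setD in_setU in_setD => /andP[nE' eE]; rewrite eE andbT.
    case hE: (E \in edges (relS S)) => //=.
    move: hE; rewrite /edges in_set => /existsP[u /existsP[v /andP[huv /eqP EE]]].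
    have nuv : ~~ relS S' u v.
      apply/negP => h'; move/negP: nE'; apply; rewrite /edges in_set.
      by apply/existsP; exists u; apply/existsP; exists v; rewrite h' EE eqxx.
    move: nuv; rewrite S'E huv /= negbK => /orP[/andP[uA vB]|/andP[uB vA]].
    + by apply/imsetP; exists (u, v); rewrite // inE /= uA vB huv.
    + apply/imsetP; exists (v, u); first by rewrite inE /= vA uB Ssym huv.
      by rewrite EE /= setUC.
  apply: (leq_trans (subset_leq_card sub)).
  apply: (leq_trans (leq_card_setU _ _)); rewrite /delS leq_add2l.
  exact: leq_imset_card.
Qed.

Theorem lemma3p13 (R : realFieldType) (T : finType) (e : rel T)
    (e_sym : symmetric e) (e_irr : irreflexive e) (q : R) (hq : 0 < q) :
  exists h : rel T,
    [/\ symmetric h,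
        (forall x y, h x y -> e x y),
        (#|edges e :\: edges h|%:R <= q * (#|T|%:R) ^+ 2)
      & forall x : T, cut_dense h (component h x) q].
Proof.
pose P (S : {set T * T}) := [&& S \subset [set p | e p.1 p.2],
   [forall u, forall v, relS S u v == relS S v u] &
   ((delS e S)%:R <= q * (Phi S)%:R)].
pose S0 := [set p : T * T | e p.1 p.2].
have PS0 : P S0.
  apply/and3P; split.
  - by [].

  - by apply/forallP => u; apply/forallP => v; rewrite /relS !inE e_sym.
  - have -> : delS e S0 = 0%N.
      apply/eqP; rewrite cards_eq0 setD_eq0; apply/subsetP => E.
      rewrite /edges !in_set => /existsP[u /existsP[v /andP[huv EE]]].
      by apply/existsP; exists u; apply/existsP; exists v; rewrite /relS inE huv.
    by rewrite mulr_ge0 // ltW.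
case: (arg_maxnP Phi PS0) => S /and3P[sS /forallP symS ineq] maxS.
have Ssym : symmetric (relS S).
  by move=> u v; apply/eqP; have /forallP := symS u; apply.
exists (relS S); split => //.
- by move=> u v huv; have := subsetP sS _ huv; rewrite inE.
- apply: (le_trans ineq); rewrite ler_pM2l // expr2 -natrM ler_nat.
  by rewrite -card_prod; apply: max_card.
move=> x A sAC.
set C := component (relS S) x.
case: (boolP (q * #|A|%:R * #|C :\: A|%:R <= (e_between (relS S) A (C :\: A))%:R)) => // viol.
exfalso.
have [S'sym lePhi pos ledel] := @split_step R T e q S Ssym x A sAC viol.
set S' := S :\: _ in S'sym lePhi ledel.
have PS' : P S'.
  apply/and3P; split.
  - by apply: subset_trans sS; apply: subsetDl.
  - by apply/forallP => u; apply/forallP => v; rewrite S'sym.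
  - apply: (le_trans (y := ((delS e S)%:R + (e_between (relS S) A (C :\: A))%:R)));
      first by rewrite -natrD ler_nat.
    apply: (le_trans (y := q * (Phi S)%:R + q * #|A|%:R * #|C :\: A|%:R)).
      by rewrite lerD // ltW // ltNge.
    rewrite -mulrA -mulrDr ler_pM2l // -natrM -natrD ler_nat //.
have := leq_trans lePhi (maxS S' PS').
by rewrite -{2}[Phi S]addn0 leq_add2l leqNgt pos.
Qed.
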